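(* Let $\Gamma$ be a finite undirected simple graph with vertex set $V=\{x_1,\dots,x_n\}$ such that no vertex has degree $n-1$, and suppose $\Gamma=\ast_{i=1}^k\Gamma^{(i)}$ where no $\Gamma^{(i)}$ can be written as a simplicial join of two graphs with nonempty vertex sets. Identify $G_\Gamma$ with $\prod_{i=1}^k G_{\Gamma^{(i)}}$ and set $H^{(i)}=G_{\Gamma^{(i)}}\gamma_2(G_\Gamma)$, i.e. $H^{(i)}=\gamma_2(G_{\Gamma^{(1)}})\times\cdots\times\gamma_2(G_{\Gamma^{(i-1)}})\times G_{\Gamma^{(i)}}\times\gamma_2(G_{\Gamma^{(i+1)}})\times\cdots\times\gamma_2(G_{\Gamma^{(k)}})$. Then for every automorphism $\varphi$ of $G_\Gamma$ there exists a unique permutation $\sigma\in S_k$ such that (i) $\varphi(H^{(i)})=H^{(\sigma(i))}$ for all $i=1,\dots,k$, and (ii) $\Gamma^{(i)}\cong\Gamma^{(\sigma(i))}$ for all $i=1,\dots,k$.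
   Context: For a finite undirected simple graph $\Gamma$ with vertex set $\{x_1,\dots,x_n\}$ and edge set $E$, the group $G_\Gamma$ is defined by the presentation with generators $x_1,\dots,x_n$ and $y_{i,j}$ for each pair $i<j$ with $x_ix_j\notin E$, and relations $[x_j,x_i]=1$ if $x_ix_j\in E$; $[x_j,x_i]=y_{i,j}$ if $x_ix_j\notin E$ and $i<j$; and $[x_l,y_{i,j}]=1$ for all $l$ and all such $y_{i,j}$. The simplicial join $\ast_{i=1}^k\Gamma_i$ of graphs $\Gamma_i(V_i,E_i)$ is the graph with vertex set $\bigsqcup_i V_i$ and edge set $\bigsqcup_i E_i\cup\{vw: v\in V_i, w\in V_j, i<j\}$; the group of a simplicial join is the direct product of the groups of the factors. $\gamma_2(G)=[G,G]$ denotes the commutator subgroup. *)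

(* Defs.v *)
From mathcomp Require Import all_boot.
Set Implicit Arguments. Unset Strict Implicit. Unset Printing Implicit Defensive.

(* Graphs: vertex set 'I_n = {x_1,...,x_n} (0-indexed), edge relation e. *)

(* The group G_Gamma, defined by its presentation, as a setoid of words. *)

Definition Ygen (n : nat) (e : rel 'I_n) :=
  {p : 'I_n * 'I_n | (p.1 < p.2)%N && ~~ e p.1 p.2}.

(* generators: x_v (inl v) and y_{i,j} (inr p) *)
Definition gen (n : nat) (e : rel 'I_n) := ('I_n + Ygen e)%type.

(* a letter (b, g) stands for g if b = false and g^-1 if b = true *)
Definition word (n : nat) (e : rel 'I_n) := seq (bool * gen e).

Definition winv n (e : rel 'I_n) (w : word e) : word e :=
  rev (map (fun l => (~~ l.1, l.2)) w).

Definition wcomm n (e : rel 'I_n) (u v : word e) : word e :=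
  winv u ++ winv v ++ u ++ v.

Definition wx n (e : rel 'I_n) (v : 'I_n) : word e := [:: (false, inl v)].
Definition wy n (e : rel 'I_n) (p : Ygen e) : word e := [:: (false, inr p)].

Inductive relator n (e : rel 'I_n) : word e -> Prop :=
| rel_edge (i j : 'I_n) : e i j -> relator (wcomm (wx e j) (wx e i))
| rel_nonedge (p : Ygen e) :
    relator (wcomm (wx e (sval p).2) (wx e (sval p).1) ++ winv (wy p))
| rel_central (l : 'I_n) (p : Ygen e) : relator (wcomm (wx e l) (wy p)).

(* equality in G_Gamma: the congruence on words generated by free
   cancellation and the relators *)
Inductive wrel n (e : rel 'I_n) : word e -> word e -> Prop :=
| wr_refl w : wrel w w
| wr_sym u v : wrel u v -> wrel v u
| wr_trans u v w : wrel u v -> wrel v w -> wrel u w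
| wr_free (u v : word e) b g : wrel (u ++ (b, g) :: (~~ b, g) :: v) (u ++ v)
| wr_rel (u v r : word e) : relator r -> wrel (u ++ r ++ v) (u ++ v).

(* automorphisms of G_Gamma, represented by maps on words that are
   well defined on G_Gamma, multiplicative, injective and surjective *)
Definition is_aut n (e : rel 'I_n) (phi : word e -> word e) : Prop :=
  [/\ (forall u v, wrel u v -> wrel (phi u) (phi v)),
      (forall u v, wrel (phi (u ++ v)) (phi u ++ phi v)),
      (forall u v, wrel (phi u) (phi v) -> wrel u v) &
      (forall w, exists u, wrel (phi u) w)].

Inductive gsub n (e : rel 'I_n) (S : word e -> Prop) : word e -> Prop :=
| gs_base w : S w -> gsub S w
| gs_nil : gsub S [::]
| gs_mul u v : gsub S u -> gsub S v -> gsub S (u ++ v)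
| gs_inv u : gsub S u -> gsub S (winv u)
| gs_eq u v : wrel u v -> gsub S u -> gsub S v.

(* H^(i) = G_{Gamma^(i)} gamma_2(G_Gamma): generated by the x_v with v in
   the i-th join factor together with all commutators *)
Definition Hsub n (e : rel 'I_n) k (part : 'I_n -> 'I_k) (i : 'I_k) :=
  gsub (fun w : word e => (exists v, part v = i /\ w = wx e v)
                          \/ exists a b, w = wcomm a b).

Definition maps_onto n (e : rel 'I_n) (phi : word e -> word e)
    (H H' : word e -> Prop) : Prop :=
  (forall w, H w -> H' (phi w)) /\
  (forall w, H' w -> exists u, H u /\ wrel (phi u) w).

(* Gamma = *_{i<k} Gamma^(i), where Gamma^(i) is the induced subgraph on
   the nonempty vertex class {v | part v = i} *)
Definition join_decomp n (e : rel 'I_n) k (part : 'I_n -> 'I_k) : Prop :=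
  (forall i : 'I_k, exists v, part v = i) /\
  (forall u v, part u != part v -> e u v).

Definition join_irreducible_part n (e : rel 'I_n) k (part : 'I_n -> 'I_k)
    (i : 'I_k) : Prop :=
  forall A : {set 'I_n},
    (forall v, v \in A -> part v = i) -> A != set0 ->
    (exists w, part w = i /\ w \notin A) ->
    exists u v, [/\ u \in A, part v = i, v \notin A & ~~ e u v].

Definition parts_iso n (e : rel 'I_n) k (part : 'I_n -> 'I_k) (i j : 'I_k) :=
  exists f : 'I_n -> 'I_n,
    [/\ (forall u v, part u = i -> part v = i -> f u = f v -> u = v),
        (forall v, part v = i -> part (f v) = j),
        (forall w, part w = j -> exists v, part v = i /\ f v = w) &
        (forall u v, part u = i -> part v = i -> e (f u) (f v) = e u v)].

Arguments Hsub {n} e {k} part i.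
Arguments join_decomp {n} e {k} part.
Arguments join_irreducible_part {n} e {k} part i.
Arguments parts_iso {n} e {k} part i j.

(* Main.v *)
From Stdlib Require Import Setoid Morphisms Classical ClassicalEpsilon.
Require Import Defs.
From mathcomp Require Import all_boot all_fingroup all_algebra.
From mathcomp Require Import zify ring.

Set Implicit Arguments. Unset Strict Implicit. Unset Printing Implicit Defensive.

(* Proof outline:
   - G_Gamma is handled syntactically (words modulo wrel); commutators are central.
   - A Heisenberg-group model shows: commuting words have proportional
     abelianizations on every non-edge pair.
   - ab(w) = 0 implies w is a product of commutators.
   - phi induces an additive bijection L on Z^n; we study it linearly.
   - A nonzero term of det L gives a graph automorphism pi; the join factors
     are permuted by sigma and L maps V_i onto V_{sigma i}. *)


Section Grp.
Variables (n : nat) (e : rel 'I_n).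
Implicit Types u v w a b c z r : word e.

Lemma wrel_catl w u v : wrel u v -> wrel (w ++ u) (w ++ v).
Proof.
elim=> {u v} [u|u v _ IH|u v x _ IH1 _ IH2|u v b g|u v r hr].
- exact: wr_refl.
- exact: wr_sym.
- exact: wr_trans IH1 IH2.
- by rewrite !catA; apply: wr_free.
- by move: (wr_rel (w ++ u) v hr); rewrite -!catA.
Qed.

Lemma wrel_catr w u v : wrel u v -> wrel (u ++ w) (v ++ w).
Proof.
elim=> {u v} [u|u v _ IH|u v x _ IH1 _ IH2|u v b g|u v r hr].
- exact: wr_refl.
- exact: wr_sym.
- exact: wr_trans IH1 IH2.
- by rewrite -!catA /=; apply: wr_free.
- by move: (wr_rel u (v ++ w) hr); rewrite -!catA.
Qed.

End Grp.

Add Parametric Relation (n : nat) (e : rel 'I_n) : (word e) (@wrel n e)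
  reflexivity proved by (@wr_refl n e)
  symmetry proved by (@wr_sym n e)
  transitivity proved by (@wr_trans n e) as wrel_rel.

Add Parametric Morphism (n : nat) (e : rel 'I_n) : (@cat (bool * gen e))
  with signature (@wrel n e) ==> (@wrel n e) ==> (@wrel n e) as cat_mor.
Proof.
move=> u u' hu v v' hv.
apply: wr_trans (wrel_catr _ hu) _.
exact: wrel_catl.
Qed.

Section Grp2.
Variables (n : nat) (e : rel 'I_n).
Implicit Types u v w a b c z r : word e.

Lemma winv_cat u v : winv (u ++ v) = winv v ++ winv u.
Proof. by rewrite /winv map_cat rev_cat. Qed.

Lemma winvK u : winv (winv u) = u.
Proof.
rewrite /winv map_rev revK -map_comp.
by elim: u => //= [[b g] u ->]; rewrite /= negbK.
Qed.

Lemma winv_cons l u : winv (l :: u) = winv u ++ [:: (~~ l.1, l.2)].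
Proof. by rewrite /winv map_cons rev_cons cats1. Qed.

Lemma canc_l u w : wrel (winv u ++ u ++ w) w.
Proof.
elim: u w => [|[b g] u IH] w; first by rewrite /winv /=; reflexivity.
rewrite winv_cons -catA cat_cons /=.
have h := wr_free (winv u) (u ++ w) (~~ b) g.
rewrite negbK in h.
exact: wr_trans h (IH w).
Qed.

Lemma canc_r u w : wrel (u ++ winv u ++ w) w.
Proof. by have := canc_l (winv u) w; rewrite winvK. Qed.

Lemma canc_l0 u : wrel (winv u ++ u) [::].
Proof. by have := canc_l u [::]; rewrite cats0. Qed.
Lemma canc_r0 u : wrel (u ++ winv u) [::].
Proof. by have := canc_r u [::]; rewrite cats0. Qed.

Hint Resolve wr_refl : core.

Definition wcm u v := wrel (u ++ v) (v ++ u).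
Definition central z := forall w, wcm z w.

Lemma wcomm_id a b : wrel (b ++ a ++ wcomm a b) (a ++ b).
Proof. by rewrite /wcomm canc_r canc_r. Qed.

Lemma comm_nil_wcm a b : wrel (wcomm a b) [::] -> wcm a b.
Proof. by move=> h; rewrite /wcm -(wcomm_id a b) h cats0. Qed.

Lemma wcm_nil_comm a b : wcm a b -> wrel (wcomm a b) [::].
Proof.
move=> h; rewrite /wcomm (h : wrel (a ++ b) (b ++ a)).
by rewrite canc_l canc_l0.
Qed.

Lemma rel_nil r : relator r -> wrel r [::].
Proof. by move=> h; have := wr_rel [::] [::] h; rewrite cats0. Qed.

Lemma wcm_edge i j : e i j -> wcm (wx e j) (wx e i).
Proof. by move=> h; apply: comm_nil_wcm; apply: rel_nil; apply: rel_edge. Qed.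

Lemma wy_eq (p : Ygen e) : wrel (wcomm (wx e (sval p).2) (wx e (sval p).1)) (wy p).
Proof.
have h := rel_nil (rel_nonedge p).
have h2 := wrel_catr (wy p) h.
rewrite -catA canc_l0 cats0 /= in h2.
exact: h2.
Qed.

Lemma wcm_central l (p : Ygen e) : wcm (wx e l) (wy p).
Proof. by apply: comm_nil_wcm; apply: rel_nil; apply: rel_central. Qed.

Lemma wcm_sym a b : wcm a b -> wcm b a.
Proof. by rewrite /wcm => h; symmetry. Qed.

Lemma wcm_eq_l a a' b : wrel a a' -> wcm a b -> wcm a' b.
Proof. by rewrite /wcm => h; rewrite h. Qed.

Lemma wcm_cat_l a a' b : wcm a b -> wcm a' b -> wcm (a ++ a') b.
Proof.
rewrite /wcm => h h'.
by rewrite -catA h' catA h -catA.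
Qed.

Lemma wcm_nil_l b : wcm [::] b.
Proof. by rewrite /wcm cats0. Qed.

Lemma wcm_inv_l a b : wcm a b -> wcm (winv a) b.
Proof.
rewrite /wcm => h.
transitivity (winv a ++ (b ++ a) ++ winv a).
  by rewrite -catA canc_r0 cats0.
by rewrite -h -catA canc_l.
Qed.

Lemma wcm_lett g (b : bool) w : wcm [:: (false, g)] w -> wcm [:: (b, g)] w.
Proof. by case: b => // h; apply: (wcm_inv_l h). Qed.

Lemma wcm_letters v a : (forall l, l \in v -> wcm [:: l] a) -> wcm v a.
Proof.
elim: v => [|l v IH] h; first exact: wcm_nil_l.
rewrite -cat1s; apply: wcm_cat_l; first by apply: h; rewrite inE eqxx.
by apply: IH => l' hl'; apply: h; rewrite inE hl' orbT.
Qed.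

Lemma wcomm_xx i j : wcomm (wx e j) (wx e i) =
  [:: (true, inl j); (true, inl i); (false, inl j); (false, inl i)].
Proof. by []. Qed.

Lemma wy_central p : central (wy p).
Proof.
move=> w; apply: wcm_sym; apply: wcm_letters => -[b [v|q]] _; apply: wcm_lett.
  exact: wcm_central.
apply: (wcm_eq_l (wy_eq q)).
rewrite wcomm_xx; apply: wcm_letters => l.
by rewrite !inE => /or4P [] /eqP ->; apply: wcm_lett; apply: wcm_central.
Qed.

Lemma central_eq z z' : wrel z z' -> central z -> central z'.
Proof. by move=> h hz w; apply: wcm_eq_l h (hz w). Qed.

Lemma central_nil : central [::].
Proof. by move=> w; apply: wcm_nil_l. Qed.

Lemma central_cat z z' : central z -> central z' -> central (z ++ z').
Proof. by move=> h h' w; apply: wcm_cat_l. Qed.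

Lemma central_inv z : central z -> central (winv z).
Proof. by move=> h w; apply: wcm_inv_l. Qed.

Lemma central_conj z g : central z -> wrel (winv g ++ z ++ g) z.
Proof. by move=> h; rewrite (h g : wrel (z ++ g) (g ++ z)) canc_l. Qed.

Lemma wcomm_inv a b : winv (wcomm a b) = wcomm b a.
Proof. by rewrite /wcomm !winv_cat !winvK -!catA. Qed.


Lemma wcomm_nil_l b : wrel (wcomm [::] b) [::].
Proof. by rewrite /wcomm /= canc_l0. Qed.

Lemma wcomm_nil_r a : wrel (wcomm a [::]) [::].
Proof. by rewrite /wcomm /= cats0 canc_l0. Qed.

Lemma wcomm_id1 a b1 b2 :
  wrel (wcomm a (b1 ++ b2)) (wcomm a b2 ++ winv b2 ++ wcomm a b1 ++ b2).
Proof. by rewrite /wcomm winv_cat -!catA; symmetry; rewrite canc_r canc_r. Qed.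

Lemma wcomm_id2 a1 a2 b :
  wrel (wcomm (a1 ++ a2) b) ((winv a2 ++ wcomm a1 b ++ a2) ++ wcomm a2 b).
Proof. by rewrite /wcomm winv_cat -!catA; symmetry; rewrite canc_r canc_r. Qed.

Lemma central_wcomm_inv_l a b : central (wcomm a b) -> central (wcomm (winv a) b).
Proof.
move=> h; have h' : central (wcomm b a) by rewrite -wcomm_inv; apply: central_inv.
refine (central_eq _ h').
rewrite -{1}(central_conj (winv a) h') winvK /wcomm winvK -!catA canc_r0 cats0.
by [].
Qed.

Lemma central_wcomm_inv_r a b : central (wcomm a b) -> central (wcomm a (winv b)).
Proof.
move=> h; have h' : central (wcomm b a) by rewrite -wcomm_inv; apply: central_inv.
refine (central_eq _ h').
rewrite -{1}(central_conj (winv b) h') winvK /wcomm winvK -!catA canc_r.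
by [].
Qed.

Hypothesis e_sym : symmetric e.

Lemma central_xx i j : central (wcomm (wx e i) (wx e j)).
Proof.
have hnil : forall a b, wcm a b -> central (wcomm a b).
  by move=> a b h; apply: central_eq central_nil; symmetry; apply: wcm_nil_comm.
case: (eqVneq i j) => [->|nij].
  by apply: hnil; rewrite /wcm.
case hij: (e i j).
  by apply: hnil; apply: wcm_edge; rewrite e_sym.
case: (ltngtP i j) => hlt.
- have hp : ((i, j).1 < (i, j).2) && ~~ e (i, j).1 (i, j).2 by rewrite /= hlt hij.
  have := wy_eq (exist _ (i, j) hp) => /= hw.
  rewrite -wcomm_inv; apply: central_inv.
  exact: central_eq (wr_sym hw) (wy_central _).
- have hp : ((j, i).1 < (j, i).2) && ~~ e (j, i).1 (j, i).2 by rewrite /= hlt e_sym hij.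
  have := wy_eq (exist _ (j, i) hp) => /= hw.
  exact: central_eq (wr_sym hw) (wy_central _).
- by move: nij; rewrite -val_eqE /= hlt eqxx.
Qed.

Lemma central_letters l l' : central (wcomm [:: l] [:: l']).
Proof.
have hnil : forall a b, wcm a b -> central (wcomm a b).
  by move=> a b h; apply: central_eq central_nil; symmetry; apply: wcm_nil_comm.
have hy : forall (b : bool) p, central [:: (b, inr p)].
  move=> [] p; last exact: wy_central.
  by have := central_inv (wy_central p).
case: l l' => [b [i|p]] [b' [j|q]]; last first.
- by apply: hnil; apply: hy.
- by apply: hnil; apply: hy.
- by apply: hnil; apply: wcm_sym; apply: hy.
have hi : [:: (b, inl i)] = if b then winv (wx e i) else wx e i :> word e by case: b.
have hj : [:: (b', inl j)] = if b' then winv (wx e j) else wx e j :> word e by case: b'.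
rewrite hi hj.
case: b {hi}; case: b' {hj}.
- by apply: central_wcomm_inv_l; apply: central_wcomm_inv_r; apply: central_xx.
- by apply: central_wcomm_inv_l; apply: central_xx.
- by apply: central_wcomm_inv_r; apply: central_xx.
- exact: central_xx.
Qed.

Lemma central_wcomm_l l b : central (wcomm [:: l] b).
Proof.
elim: b => [|l' b IH].
  exact: central_eq (wr_sym (wcomm_nil_r _)) central_nil.
rewrite -[l' :: b]cat1s; refine (central_eq (wr_sym (wcomm_id1 _ _ _)) _).
apply: central_cat => //.
refine (central_eq (wr_sym (central_conj _ (central_letters l l'))) _).
exact: central_letters.
Qed.

Lemma central_wcomm a b : central (wcomm a b).
Proof.
elim: a => [|l a IH].
  exact: central_eq (wr_sym (wcomm_nil_l _)) central_nil.
rewrite -[l :: a]cat1s; refine (central_eq (wr_sym (wcomm_id2 _ _ _)) _).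
apply: central_cat => //.
refine (central_eq (wr_sym (central_conj _ (central_wcomm_l l b))) _).
exact: central_wcomm_l.
Qed.

End Grp2.

#[global] Hint Resolve wr_refl : core.
Import GRing.Theory Num.Theory.
Local Open Scope ring_scope.


Definition h3 := (int * int * int)%type.
Definition hmul (x y : h3) : h3 :=
  (x.1.1 + y.1.1, x.1.2 + y.1.2, x.2 + y.2 + x.1.1 * y.1.2).
Definition hinv (x : h3) : h3 := (- x.1.1, - x.1.2, - x.2 + x.1.1 * x.1.2).
Definition hone : h3 := (0, 0, 0).

Lemma hmulA x y z : hmul x (hmul y z) = hmul (hmul x y) z.
Proof. by case: x => [[? ?] ?]; case: y => [[? ?] ?]; case: z => [[? ?] ?]; rewrite /hmul /=; congr (_, _, _); ring. Qed.
Lemma hmul1 x : hmul hone x = x.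
Proof. by case: x => [[? ?] ?]; rewrite /hmul /=; congr (_, _, _); ring. Qed.
Lemma hmulx1 x : hmul x hone = x.
Proof. by case: x => [[? ?] ?]; rewrite /hmul /=; congr (_, _, _); ring. Qed.
Lemma hmulV x : hmul x (hinv x) = hone.
Proof. by case: x => [[? ?] ?]; rewrite /hmul /hone /=; congr (_, _, _); ring. Qed.
Lemma hmulVx x : hmul (hinv x) x = hone.
Proof. by case: x => [[? ?] ?]; rewrite /hmul /hone /=; congr (_, _, _); ring. Qed.

Definition hchain x y := hmul (hinv x) (hmul (hinv y) (hmul x (hmul y hone))).

Lemma hchain_triv x y : x.1.1 * y.1.2 = y.1.1 * x.1.2 -> hchain x y = hone.
Proof.
case: x => [[a b] c]; case: y => [[a' b'] c'] /= h.
rewrite /hchain /hmul /hinv /hone /=; congr (_, _, _); try ring.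
nia.
Qed.

Lemma hchain_12 x y : (hchain x y).1.1 = 0 /\ (hchain x y).1.2 = 0.
Proof. by case: x => [[a b] c]; case: y => [[a' b'] c']; rewrite /hchain /hmul /hinv /=; split; ring. Qed.

Section Ab.
Variables (n : nat) (e : rel 'I_n).
Implicit Types u v w a b c z r : word e.

Definition lc (l : bool * gen e) (x : 'I_n) : int :=
  match l.2 with inl y => if y == x then (if l.1 then -1 else 1) else 0 | inr _ => 0 end.
Definition ab w (x : 'I_n) : int := \sum_(l <- w) lc l x.

Lemma ab_cat u w x : ab (u ++ w) x = ab u x + ab w x.
Proof. by rewrite /ab big_cat. Qed.
Lemma ab_nil x : ab [::] x = 0.
Proof. by rewrite /ab big_nil. Qed.
Lemma ab_cons l u x : ab (l :: u) x = lc l x + ab u x.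
Proof. by rewrite /ab big_cons. Qed.
Lemma lc_neg (b : bool) g x : lc (~~ b, g) x = - lc (b, g) x.
Proof.
rewrite /lc /=; case: g => [y|p] /=; last by rewrite oppr0.
by case: (y == x); case: b => //=; rewrite ?oppr0 ?opprK.
Qed.
Lemma ab_winv u x : ab (winv u) x = - ab u x.
Proof.
elim: u => [|[b g] u IH]; first by rewrite /winv /= ab_nil oppr0.
by rewrite winv_cons ab_cat IH ab_cons ab_cons ab_nil addr0 lc_neg; ring.
Qed.
Lemma ab_wcomm a b x : ab (wcomm a b) x = 0.
Proof. by rewrite /wcomm !ab_cat !ab_winv; ring. Qed.

Lemma ab_wrel u w : wrel u w -> forall x, ab u x = ab w x.
Proof.
elim=> {u w} [u|u w _ IH|u v w _ IH1 _ IH2|u w b g|u w r hr] x.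
- by [].
- by rewrite IH.
- by rewrite IH1 IH2.
- by rewrite !ab_cat !ab_cons lc_neg; ring.
- rewrite !ab_cat; case: hr => [i j _|p|l p].
  + by rewrite ab_wcomm add0r.
  + by rewrite ab_cat ab_wcomm ab_winv /wy ab_cons ab_nil /lc /=; ring.
  + by rewrite ab_wcomm add0r.
Qed.

Definition Om (a b : 'I_n -> int) := forall i j, ~~ e i j -> a i * b j = a j * b i.

Section H3.
Variables (i j : 'I_n).
Definition hx (v : 'I_n) : h3 := if v == i then (1, 0, 0) else if v == j then (0, 1, 0) else hone.
Definition hgen (g : gen e) : h3 :=
  match g with inl v => hx v | inr p => hchain (hx (sval p).2) (hx (sval p).1) end.
Definition hlet (l : bool * gen e) := if l.1 then hinv (hgen l.2) else hgen l.2.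
Definition heval w : h3 := foldr (fun l acc => hmul (hlet l) acc) hone w.

Lemma heval_cat u w : heval (u ++ w) = hmul (heval u) (heval w).
Proof. by elim: u => [|l u IH] /=; rewrite ?hmul1 // IH hmulA. Qed.

Hypothesis e_sym : symmetric e.
Hypothesis nij : i != j.
Hypothesis neij : ~~ e i j.

Lemma hx_comm (a b : 'I_n) : e a b -> (hx a).1.1 * (hx b).1.2 = (hx b).1.1 * (hx a).1.2.
Proof.
move=> hab; rewrite /hx.
case: (eqVneq a i) => [ai|ai]; case: (eqVneq b i) => [bi|bi];
  case: (eqVneq a j) => [aj|aj]; case: (eqVneq b j) => [bj|bj] //=; subst => //.
all: try by move: (nij); rewrite eqxx.
all: try by move: (neij); rewrite hab.
all: try by move: (neij); rewrite e_sym hab.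
Qed.

Lemma heval_rel r : relator r -> heval r = hone.
Proof.
case=> [a b hab|p|l p].
- rewrite /= -/(hchain (hx b) (hx a)) hchain_triv //; apply/esym; exact: hx_comm.
- rewrite heval_cat.
  have -> : heval (wcomm (wx e (sval p).2) (wx e (sval p).1)) = hgen (inr p) by [].
  by rewrite /= hmulx1 hmulV.
- rewrite /= -/(hchain (hx l) (hchain (hx (sval p).2) (hx (sval p).1))) hchain_triv //.
  by case: (hchain_12 (hx (sval p).2) (hx (sval p).1)) => -> ->; rewrite mulr0 mul0r.
Qed.

Lemma heval_wrel u w : wrel u w -> heval u = heval w.
Proof.
elim=> {u w} [u|u w _ IH|u v w _ IH1 _ IH2|u w b g|u w r hr].
- by [].
- by rewrite IH.
- by rewrite IH1 IH2.
- rewrite !heval_cat /=; congr (hmul _ _); rewrite hmulA.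
  rewrite /hlet /=; case: b => /=; by rewrite ?hmulVx ?hmulV hmul1.
- by rewrite !heval_cat (heval_rel hr) hmul1.
Qed.

Lemma heval_ab w : (heval w).1.1 = ab w i /\ (heval w).1.2 = ab w j.
Proof.
elim: w => [|[b g] w [IH1 IH2]]; first by rewrite !ab_nil.
rewrite !ab_cons /= -IH1 -IH2 /hlet /=.
case: g => [v|p] /=.
- rewrite /hx /lc /=; case: (eqVneq v i) => [->|vi].
    by rewrite (negbTE nij); case: b => /=; rewrite ?oppr0.
  by case: (v == j); case: b => /=; rewrite ?oppr0.
- by case: b; rewrite /lc /=; split; ring.
Qed.

Lemma wcm_om2 u w : wcm u w -> ab u i * ab w j = ab w i * ab u j.
Proof.
move=> h; have := heval_wrel h; rewrite !heval_cat.
case: (heval_ab u) => <- <-; case: (heval_ab w) => <- <-.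
case: (heval u) => [[a b] c]; case: (heval w) => [[a' b'] c'] /= [_ _ h3].
by lia.
Qed.

End H3.

Hypothesis e_sym : symmetric e.

Lemma wcm_Om u w : wcm u w -> Om (ab u) (ab w).
Proof.
move=> h i j hij; case: (eqVneq i j) => [->|nij]; first by rewrite mulrC.
by rewrite (wcm_om2 e_sym nij hij h) mulrC.
Qed.

End Ab.



Section C.
Variables (n : nat) (e : rel 'I_n).
Hypothesis e_sym : symmetric e.
Implicit Types u v w a b c z r : word e.

Definition Cset := fun w : word e => exists a b, w = wcomm a b.

Lemma gsub_mono (S S' : word e -> Prop) :
  (forall w, S w -> S' w) -> forall w, gsub S w -> gsub S' w.
Proof.
move=> h w; elim=> {w} [w /h|| u v _ IH1 _ IH2 | u _ IH | u v huv _ IH].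
- exact: gs_base.
- exact: gs_nil.
- exact: gs_mul.
- exact: gs_inv.
- exact: gs_eq huv IH.
Qed.

Lemma gsubC_y (b : bool) p : gsub Cset [:: (b, inr p)].
Proof.
have h : gsub Cset (wy p).
  by apply: gs_eq (wy_eq p) _; apply: gs_base; do 2 eexists.
by case: b => //; have := gs_inv h.
Qed.

Lemma notin_sign (b : bool) (x : 'I_n) w : (~~ b, inl x) \notin w ->
  if b then ab w x <= 0 else 0 <= ab w x.
Proof.
elim: w => [|[b' g] w IH]; first by rewrite ab_nil; case: b.
rewrite inE negb_or => /andP [hne /IH {}IH]; rewrite ab_cons /lc /=.
case: g hne => [y|p] hne; last by rewrite add0r.
case: (eqVneq y x) => [yx|_]; last by rewrite add0r.
subst y; have hb : b' = b by move: hne IH; case: b; case: b' => //=; rewrite eqxx.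
subst b'; move: IH hne; case: b => /= IH _; lia.
Qed.

Lemma Clem m : forall w, (size w <= m)%N -> (forall x, ab w x = 0) -> gsub Cset w.
Proof.
elim: m => [|m IH] w.
  by rewrite leqn0 => /nilP -> _; apply: gs_nil.
case: w => [|[b g] w] hs hab; first exact: gs_nil.
case: g hs hab => [x|p] hs hab; last first.
  rewrite -cat1s; apply: gs_mul; first exact: gsubC_y.
  apply: IH => // y; move: (hab y); rewrite ab_cons /lc /=; lia.
have hin : (~~ b, inl x) \in w.
  apply/negPn/negP => /notin_sign; move: (hab x); rewrite ab_cons /lc /= eqxx.
  by case: (b) => /=; lia.
case/splitPr: hin hs hab => w1 w2 hs hab.
set l := (b, inl x) : bool * gen e; set l' := (~~ b, inl x) : bool * gen e.
have hw' : forall c, wrel (w1 ++ [:: l] ++ c) ([:: l] ++ w1) -> central c ->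
    wrel (l :: w1 ++ l' :: w2) (w1 ++ w2 ++ c).
  move=> c h1 hc; have h2 := hc (l' :: w2).
  apply: wr_trans (wrel_catr (l' :: w2) (wr_sym h1)) _.
  rewrite -!catA.
  apply: wr_trans (wrel_catl w1 (wrel_catl [:: l] h2)) _.
  exact: (wr_free w1 (w2 ++ c) b (inl x)).
have hw := hw' _ (wcomm_id [:: l] w1) (central_wcomm e_sym [:: l] w1).
apply: gs_eq (wr_sym hw) _.
rewrite catA; apply: gs_mul; last by apply: gs_base; do 2 eexists.
apply: IH.
  by move: hs; rewrite /= !size_cat /=; lia.
move=> y; move: (hab y); rewrite ab_cons !ab_cat ab_cons /l /l' lc_neg => h; rewrite -{}h; ring.
Qed.

Lemma Clem0 w : (forall x, ab w x = 0) -> gsub Cset w.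
Proof. exact: (@Clem (size w) w (leqnn _)). Qed.

End C.



Lemma winv_wrel n (e : rel 'I_n) (u v : word e) : wrel u v -> wrel (winv u) (winv v).
Proof.
move=> h.
transitivity (winv u ++ v ++ winv v); first by rewrite canc_r0 cats0.
apply: wr_trans (wrel_catl (winv u) (wrel_catr (winv v) (wr_sym h))) _.
exact: canc_l.
Qed.

Add Parametric Morphism (n : nat) (e : rel 'I_n) : (@winv n e)
  with signature (@wrel n e) ==> (@wrel n e) as winv_mor.
Proof. exact: winv_wrel. Qed.

Lemma sgn_abs (a : int) : (if a < 0 then -1 else 1) *+ `|a|%N = a.
Proof.
case: a => m /=; first by rewrite natz.
by rewrite NegzE mulNrn natz.
Qed.

Section Phi.
Variables (n : nat) (e : rel 'I_n).
Hypothesis e_sym : symmetric e.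
Implicit Types u w z r : word e.

Definition delta (j : 'I_n) : 'I_n -> int := fun v => (v == j)%:R.

Definition Xw (a : 'I_n -> int) : word e :=
  flatten [seq nseq `|a v|%N (a v < 0, @inl 'I_n (Ygen e) v) | v <- enum 'I_n].

Lemma ab_nseq m (l : bool * gen e) x : ab (nseq m l) x = lc l x *+ m.
Proof. by elim: m => [|m IH]; rewrite ?ab_nil // ab_cons IH mulrS. Qed.

Lemma ab_flatten (s : seq (word e)) x : ab (flatten s) x = \sum_(w <- s) ab w x.
Proof. by elim: s => [|w s IH]; rewrite ?big_nil ?ab_nil //= ab_cat IH big_cons. Qed.

Lemma ab_Xw (a : 'I_n -> int) x : ab (Xw a) x = a x.
Proof.
rewrite /Xw ab_flatten big_map (bigD1_seq x) ?mem_enum ?enum_uniq //=.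
rewrite big1_seq ?addr0; last first.
  by move=> v /andP [hv _]; rewrite ab_nseq /lc /= (negbTE hv) mul0rn.
by rewrite ab_nseq /lc /= eqxx sgn_abs.
Qed.

Lemma Xw_mem (a : 'I_n -> int) (l : bool * gen e) : l \in Xw a -> exists v, l = (a v < 0, inl v) /\ a v != 0.
Proof.
case/flatten_mapP => v _; rewrite mem_nseq => /andP [h /eqP ->].
by exists v; split => //; rewrite -absz_gt0.
Qed.

Lemma wcm_xlet (b b' : bool) (s t : 'I_n) : (s == t) || e s t ->
  wcm [:: (b, inl s)] [:: (b', inl t) : bool * gen e].
Proof.
move=> h; apply: wcm_lett; apply: wcm_sym; apply: wcm_lett; apply: wcm_sym.
case/orP: h => [/eqP ->|h]; first by rewrite /wcm.
by apply: wcm_edge; rewrite e_sym.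
Qed.

Lemma Xw_comm (a b : 'I_n -> int) :
  (forall s t, a s != 0 -> b t != 0 -> (s == t) || e s t) -> wcm (Xw a) (Xw b).
Proof.
move=> h; apply: wcm_letters => l /Xw_mem [s [-> hs]].
apply: wcm_sym; apply: wcm_letters => l' /Xw_mem [t [-> ht]].
by apply: wcm_xlet; rewrite eq_sym e_sym; apply: h.
Qed.

Lemma gsubC_central w : gsub (@Cset n e) w -> central w.
Proof.
elim=> {w} [w [a [b ->]]|| u v _ IH1 _ IH2 | u _ IH | u v huv _ IH].
- exact: central_wcomm.
- exact: central_nil.
- exact: central_cat.
- exact: central_inv.
- exact: central_eq huv IH.
Qed.

Lemma wcm_central2 (a b z z' : word e) : wcm a b -> central z -> central z' -> wcm (a ++ z) (b ++ z').
Proof.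
move=> h hz hz'; apply: wcm_cat_l; last exact: hz.
apply: wcm_sym; apply: wcm_cat_l; first exact: wcm_sym.
exact: hz'.
Qed.

Lemma wcm_wrel (a a' b b' : word e) : wrel a a' -> wrel b b' -> wcm a b -> wcm a' b'.
Proof. by rewrite /wcm => ha hb; rewrite ha hb. Qed.

Section Additive.
Variable F : word e -> 'I_n -> int.
Hypothesis F_cat : forall (u v : word e) x, F (u ++ v) x = F u x + F v x.
Hypothesis F_winv : forall u x, F (winv u) x = - F u x.
Hypothesis F_nil : forall x, F [::] x = 0.
Hypothesis F_wrel : forall (u v : word e), wrel u v -> forall x, F u x = F v x.
Lemma additive_C w : gsub (@Cset n e) w -> forall x, F w x = 0.
Proof.
elim=> {w} [w [a [b ->]]|| u v _ IH1 _ IH2 | u _ IH | u v huv _ IH] x.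
- by rewrite /wcomm !F_cat !F_winv; ring.
- exact: F_nil.
- by rewrite F_cat IH1 IH2 addr0.
- by rewrite F_winv IH oppr0.
- by rewrite -(F_wrel huv) IH.
Qed.
End Additive.

Lemma ab_C w : gsub (@Cset n e) w -> forall x, ab w x = 0.
Proof.
apply: additive_C; [exact: ab_cat|exact: ab_winv|exact: ab_nil|exact: ab_wrel].
Qed.

Variable phi : word e -> word e.
Hypothesis hphi : is_aut phi.

Lemma phi_resp (u v : word e) : wrel u v -> wrel (phi u) (phi v). Proof. by case: hphi => h _ _ _; apply: h. Qed.
Lemma phi_mul (u v : word e) : wrel (phi (u ++ v)) (phi u ++ phi v). Proof. by case: hphi => _ h _ _; apply: h. Qed.
Lemma phi_refl (u v : word e) : wrel (phi u) (phi v) -> wrel u v. Proof. by case: hphi => _ _ h _; apply: h. Qed.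
Lemma phi_surj w : exists u, wrel (phi u) w. Proof. by case: hphi => _ _ _ h; apply: h. Qed.

Lemma phi_nil : wrel (phi [::]) [::].
Proof.
have h := phi_mul [::] [::].
have := wrel_catl (winv (phi [::])) h.
by rewrite canc_l0 canc_l => h'; symmetry.
Qed.

Lemma phi_inv u : wrel (phi (winv u)) (winv (phi u)).
Proof.
have h : wrel (phi (winv u) ++ phi u) [::].
  by rewrite -phi_mul (phi_resp (canc_l0 u)) phi_nil.
transitivity (phi (winv u) ++ phi u ++ winv (phi u)); first by rewrite canc_r0 cats0.
by rewrite catA h.
Qed.

Lemma phi_wcomm (a b : word e) : wrel (phi (wcomm a b)) (wcomm (phi a) (phi b)).
Proof. by rewrite /wcomm !phi_mul !phi_inv. Qed.

Lemma phi_wcm (u v : word e) : wcm u v -> wcm (phi u) (phi v).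
Proof. by rewrite /wcm => h; rewrite -!phi_mul (phi_resp h). Qed.

Lemma phi_wcm_refl (u v : word e) : wcm (phi u) (phi v) -> wcm u v.
Proof. by rewrite /wcm => h; apply: phi_refl; rewrite !phi_mul. Qed.

Definition fab w x := ab (phi w) x.

Lemma fab_cat (u v : word e) x : fab (u ++ v) x = fab u x + fab v x.
Proof. by rewrite /fab (ab_wrel (phi_mul u v)) ab_cat. Qed.
Lemma fab_nil x : fab [::] x = 0.
Proof. by rewrite /fab (ab_wrel phi_nil) ab_nil. Qed.
Lemma fab_winv u x : fab (winv u) x = - fab u x.
Proof. by rewrite /fab (ab_wrel (phi_inv u)) ab_winv. Qed.
Lemma fab_wrel (u v : word e) : wrel u v -> forall x, fab u x = fab v x.
Proof. by move=> h x; rewrite /fab (ab_wrel (phi_resp h)). Qed.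

Lemma fab_C w : gsub (@Cset n e) w -> forall x, fab w x = 0.
Proof. apply: additive_C; [exact: fab_cat|exact: fab_winv|exact: fab_nil|exact: fab_wrel]. Qed.

Lemma fab_ab (u u' : word e) : (forall x, ab u x = ab u' x) -> forall x, fab u x = fab u' x.
Proof.
move=> h x.
have hC : gsub (@Cset n e) (winv u ++ u') by apply: Clem0 => // y; rewrite ab_cat ab_winv h addNr.
have := fab_C hC x; rewrite fab_cat fab_winv => h'.
by move/eqP: h'; rewrite addrC subr_eq0 => /eqP ->.
Qed.

Definition L (a : 'I_n -> int) x := fab (Xw a) x.

Lemma L_ab w x : fab w x = L (ab w) x.
Proof. by apply: fab_ab => y; rewrite ab_Xw. Qed.

Lemma L_ext a a' : a =1 a' -> forall x, L a x = L a' x.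
Proof. by move=> h x; apply: fab_ab => y; rewrite !ab_Xw h. Qed.

Lemma L_add (a b : 'I_n -> int) x : L (fun v => a v + b v) x = L a x + L b x.
Proof.
rewrite /L -fab_cat; apply: fab_ab => y; by rewrite ab_cat !ab_Xw.
Qed.

Lemma L_zero x : L (fun _ => 0) x = 0.
Proof. by rewrite /L (fab_ab (u' := [::])) ?fab_nil // => y; rewrite ab_Xw ab_nil. Qed.

Lemma L_opp (a : 'I_n -> int) x : L (fun v => - a v) x = - L a x.
Proof. by rewrite /L -fab_winv; apply: fab_ab => y; rewrite ab_winv !ab_Xw. Qed.

Lemma L_muln (a : 'I_n -> int) m x : L (fun v => a v *+ m) x = L a x *+ m.
Proof.
elim: m => [|m IH]; first by rewrite (L_ext (a' := fun _ => 0)) ?L_zero // => v; rewrite mulr0n.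
by rewrite (L_ext (a' := fun v => a v + a v *+ m)) ?L_add ?IH ?mulrS // => v; rewrite mulrS.
Qed.

Lemma L_scale (k : int) (a : 'I_n -> int) x : L (fun v => k * a v) x = k * L a x.
Proof.
case: k => m.
  rewrite (L_ext (a' := fun v => a v *+ m)); last by move=> v; rewrite -natz mulr_natl.
  by rewrite L_muln -natz mulr_natl.
rewrite (L_ext (a' := fun v => - (a v *+ m.+1))); last first.
  by move=> v; rewrite NegzE mulNr -natz mulr_natl.
by rewrite L_opp L_muln NegzE mulNr -natz mulr_natl.
Qed.

Lemma L_sub (a b : 'I_n -> int) x : L (fun v => a v - b v) x = L a x - L b x.
Proof. by rewrite L_add L_opp. Qed.

Lemma L_sum (I : Type) (s : seq I) (f : I -> 'I_n -> int) x :
  L (fun v => \sum_(j <- s) f j v) x = \sum_(j <- s) L (f j) x.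
Proof.
elim: s => [|j s IH].
  by rewrite big_nil (L_ext (a' := fun _ => 0)) ?L_zero // => v; rewrite big_nil.
rewrite big_cons -IH -L_add; apply: L_ext => v; by rewrite big_cons.
Qed.

Lemma L_lin (a : 'I_n -> int) x : L a x = \sum_(j < n) a j * L (delta j) x.
Proof.
rewrite (L_ext (a' := fun v => \sum_(j < n) a j * delta j v)); last first.
  move=> v; rewrite (bigD1 v) //= big1 ?addr0 /delta ?eqxx ?mulr1 // => j hj.
  by rewrite eq_sym (negbTE hj) mulr0.
by rewrite L_sum; apply: eq_bigr => j _; rewrite L_scale.
Qed.

Lemma L_surj (c : 'I_n -> int) : exists a, forall x, L a x = c x.
Proof.
case: (phi_surj (Xw c)) => u hu; exists (ab u) => x.
by rewrite -L_ab /fab (ab_wrel hu) ab_Xw.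
Qed.

Lemma phi_pre_C w : gsub (@Cset n e) w -> exists u, gsub (@Cset n e) u /\ wrel (phi u) w.
Proof.
elim=> {w} [w [a [b ->]]|| u v _ [u1 [h1 h1']] _ [u2 [h2 h2']] | u _ [u1 [h1 h1']] | u v huv _ [u1 [h1 h1']]].
- case: (phi_surj a) => a' ha; case: (phi_surj b) => b' hb.
  exists (wcomm a' b'); split; first by apply: gs_base; do 2 eexists.
  by rewrite phi_wcomm /wcomm ha hb.
- by exists [::]; split; [exact: gs_nil|exact: phi_nil].
- exists (u1 ++ u2); split; first exact: gs_mul.
  by rewrite phi_mul h1' h2'.
- exists (winv u1); split; first exact: gs_inv.
  by rewrite phi_inv h1'.
- by exists u1; split => //; rewrite h1'.
Qed.

Lemma L_inj (a : 'I_n -> int) : (forall x, L a x = 0) -> forall x, a x = 0.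
Proof.
move=> h.
have hC : gsub (@Cset n e) (phi (Xw a)) by apply: Clem0 => // x; apply: h.
case: (phi_pre_C hC) => u [hu hu'].
have hw := phi_refl hu'.
by move=> x; rewrite -(ab_Xw a x) -(ab_wrel hw) (ab_C hu).
Qed.

Lemma L_comm (a b : 'I_n -> int) :
  (forall s t, a s != 0 -> b t != 0 -> (s == t) || e s t) -> Om e (L a) (L b).
Proof.
move=> h; have := phi_wcm (Xw_comm h).
by move/(wcm_Om e_sym).
Qed.

Lemma phi_Xw_dec (a : 'I_n -> int) : exists z, central z /\ wrel (phi (Xw a)) (Xw (L a) ++ z).
Proof.
exists (winv (Xw (L a)) ++ phi (Xw a)); split; last by rewrite canc_r.
apply: gsubC_central; apply: Clem0 => // x.
by rewrite ab_cat ab_winv ab_Xw /L /fab addNr.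
Qed.

Lemma L_refl (a b : 'I_n -> int) :
  (forall s t, L a s != 0 -> L b t != 0 -> (s == t) || e s t) -> Om e a b.
Proof.
move=> h.
case: (phi_Xw_dec a) => z [hz hza]; case: (phi_Xw_dec b) => z' [hz' hzb].
have hc : wcm (phi (Xw a)) (phi (Xw b)).
  apply: wcm_wrel (wr_sym hza) (wr_sym hzb) _.
  by apply: wcm_central2 => //; apply: Xw_comm.
have := wcm_Om e_sym (phi_wcm_refl hc).
by move=> hom i j hij; rewrite -!(ab_Xw a) -!(ab_Xw b); apply: hom.
Qed.

End Phi.



Definition propb (P : Prop) : bool := if excluded_middle_informative P then true else false.
Lemma propbP (P : Prop) : reflect P (propb P).
Proof. by rewrite /propb; case: excluded_middle_informative => h; constructor. Qed.

Section Main.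
Variables (n : nat) (e : rel 'I_n).
Hypothesis e_sym : symmetric e.
Hypothesis e_irr : irreflexive e.
Hypothesis no_full : forall v : 'I_n, exists w, w != v /\ ~~ e v w.
Variables (k : nat) (part : 'I_n -> 'I_k).
Hypothesis hjoin : join_decomp e part.
Hypothesis hirr : forall i : 'I_k, join_irreducible_part e part i.

Lemma nonedge_part (u v : 'I_n) : ~~ e u v -> part u = part v.
Proof.
move=> h; apply/eqP; apply/negPn/negP => hp.
by case: hjoin => _ /(_ u v hp) he; rewrite he in h.
Qed.

Lemma par2 (x1 x2 y1 y2 q1 q2 : int) : (q1 != 0) || (q2 != 0) ->
  x1 * q2 = x2 * q1 -> y1 * q2 = y2 * q1 -> x1 * y2 = x2 * y1.
Proof.
move=> hq h1 h2; apply/eqP; rewrite -subr_eq0; apply/eqP.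
have e1 : q1 * (x1 * y2 - x2 * y1) = x1 * (y2 * q1 - y1 * q2) - y1 * (x2 * q1 - x1 * q2) by ring.
have e2 : q2 * (x1 * y2 - x2 * y1) = y2 * (x1 * q2 - x2 * q1) - x2 * (y1 * q2 - y2 * q1) by ring.
rewrite h1 h2 !subrr !mulr0 subrr in e1 e2.
case/orP: hq => hq.
  by move/eqP: e1; rewrite mulf_eq0 (negbTE hq) => /eqP.
by move/eqP: e2; rewrite mulf_eq0 (negbTE hq) => /eqP.
Qed.

Section Indec.
Variables (W W' : ('I_n -> int) -> Prop).
Hypothesis hOm : forall w w', W w -> W' w' -> Om e w w'.
Hypothesis hdec : forall c : 'I_n -> int, exists w w', [/\ W w, W' w' & forall x, c x = w x + w' x].

Lemma key2 (r s : 'I_n) : r != s -> ~~ e r s ->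
  (forall w, W w -> w r = 0 /\ w s = 0) \/ (forall w', W' w' -> w' r = 0 /\ w' s = 0).
Proof.
move=> nrs ers.
case: (classic (forall w, W w -> w r = 0 /\ w s = 0)) => [h|h]; first by left.
right; move=> w' hw'; apply: NNPP => h'.
apply: h => w0 hw0; apply: NNPP => h0.
have hq0 : (w0 r != 0) || (w0 s != 0).
  by apply/negPn/negP; rewrite negb_or !negbK => /andP [/eqP ? /eqP ?]; apply: h0.
have hq0' : (w' r != 0) || (w' s != 0).
  by apply/negPn/negP; rewrite negb_or !negbK => /andP [/eqP ? /eqP ?]; apply: h'.
case: (hdec (delta r)) => w1 [w1' [hw1 hw1' d1]].
case: (hdec (delta s)) => w2 [w2' [hw2 hw2' d2]].
have om : forall a b, W a -> W' b -> a r * b s = a s * b r.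
  by move=> a b ha hb; exact: (hOm ha hb ers).
have D1 : w1 r * w2 s = w1 s * w2 r.
  by apply: (par2 hq0'); apply: om.
have D2 : w1' r * w2' s = w1' s * w2' r.
  apply: (par2 hq0).
    by rewrite mulrC [RHS]mulrC; symmetry; apply: om.
  by rewrite mulrC [RHS]mulrC; symmetry; apply: om.
have D3 : w1 r * w2' s = w1 s * w2' r by apply: om.
have D4 : w2 r * w1' s = w2 s * w1' r by apply: om.
have := d1 r; have := d1 s; have := d2 r; have := d2 s.
rewrite /delta eqxx (negbTE nrs) eq_sym (negbTE nrs) /= => h1 h2 h3 h4.
have : (1 : int) = (w1 r + w1' r) * (w2 s + w2' s) - (w1 s + w1' s) * (w2 r + w2' r).
  by rewrite -h1 -h2 -h3 -h4 ?eqxx /=; ring.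
have -> : (w1 r + w1' r) * (w2 s + w2' s) - (w1 s + w1' s) * (w2 r + w2' r) =
  (w1 r * w2 s - w1 s * w2 r) + (w1 r * w2' s - w1 s * w2' r) - (w2 r * w1' s - w2 s * w1' r)
  + (w1' r * w2' s - w1' s * w2' r) by ring.
rewrite D1 D2 D3 D4 !subrr; lia.
Qed.

Lemma Indec (t : 'I_k) :
  (forall w, W w -> forall x, part x = t -> w x = 0) \/
  (forall w', W' w' -> forall x, part x = t -> w' x = 0).
Proof.
pose S := [set x | (part x == t) && propb (exists w, W w /\ w x != 0)].
have key3 : forall x y, x \in S -> ~~ e x y -> x != y -> y \in S.
  move=> x y; rewrite inE => /andP [/eqP hx /propbP [w [hw hwx]]] hxy nxy.
  rewrite inE -(nonedge_part hxy) hx eqxx /=; apply/propbP.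
  case: (key2 nxy hxy) => [/(_ w hw) [hx0 _]|h]; first by rewrite hx0 eqxx in hwx.
  case: (hdec (delta y)) => w1 [w1' [hw1 hw1' d]].
  exists w1; split => //; move: (d y); rewrite /delta eqxx.
  by case: (h w1' hw1') => _ ->; rewrite addr0 => <-.
case: (eqVneq S set0) => [S0|Sn0].
  left => w hw x hx; apply/eqP; apply/negPn/negP => hwx.
  have : x \in S by rewrite inE hx eqxx /=; apply/propbP; exists w.
  by rewrite S0 inE.
right.
have allS : forall x, part x = t -> x \in S.
  move=> x hx; apply/negPn/negP => hxS.
  have [u [v [huS hv hvS huv]]] : exists u v, [/\ u \in S, part v = t, v \notin S & ~~ e u v].
    apply: (hirr (A := S)) => //; first by move=> v; rewrite inE => /andP [/eqP].
    by exists x.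
  have nuv : u != v by apply/eqP => euv; rewrite -euv huS in hvS.
  by rewrite (key3 u v huS huv nuv) in hvS.
move=> w' hw' x hx.
case: (no_full x) => r [nrx exr].
have nxr : x != r by rewrite eq_sym.
case: (key2 nxr exr) => [h|h]; last by case: (h w' hw').
move: (allS x hx); rewrite inE => /andP [_ /propbP [w [hw hwx]]].
by case: (h w hw) => hx0 _; rewrite hx0 eqxx in hwx.
Qed.

End Indec.

Lemma delta_neq0 (j s : 'I_n) : delta j s != 0 -> s = j.
Proof. by rewrite /delta; case: (eqVneq s j) => // _; rewrite eqxx. Qed.

Variable phi : word e -> word e.
Hypothesis hphi : is_aut phi.

Definition pre (j : 'I_n) : 'I_n -> int :=
  proj1_sig (constructive_indefinite_description _ (L_surj e_sym hphi (delta j))).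
Lemma preP j x : L phi (pre j) x = delta j x.
Proof. exact: (proj2_sig (constructive_indefinite_description _ (L_surj e_sym hphi (delta j)))). Qed.

Lemma exists_pi : exists pi : {perm 'I_n}, forall u, L phi (delta u) (pi u) != 0.
Proof.
pose M : 'M[int]_n := \matrix_(i, j) L phi (delta j) i.
pose N : 'M[int]_n := \matrix_(i, j) pre j i.
have hMN : M *m N = 1%:M.
  apply/matrixP => i j; rewrite !mxE.
  rewrite -[RHS]/(delta j i) -(preP j i) (L_lin e_sym hphi (pre j) i).
  by apply: eq_bigr => l _; rewrite !mxE mulrC.
have hdet : \det M != 0.
  apply/eqP => h0; have := congr1 determinant hMN.
  by rewrite det_mulmx h0 mul0r det1 => /eqP; rewrite eq_sym oner_eq0.
have [s hs] : exists s : 'S_n, \prod_i M i (s i) != 0.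
  apply: NNPP => hn; move: hdet; rewrite /determinant big1 ?eqxx // => s _.
  have : ~~ (\prod_i M i (s i) != 0) by apply/negP => h; apply: hn; exists s.
  by rewrite negbK => /eqP ->; rewrite mulr0.
exists s^-1%g => u.
by move/prodf_neq0: hs => /(_ (s^-1%g u) isT); rewrite mxE permKV.
Qed.

Lemma pi_edge (pi : {perm 'I_n}) : (forall u, L phi (delta u) (pi u) != 0) ->
  forall u v, e u v -> e (pi u) (pi v).
Proof.
move=> hpi u v euv; apply/negPn/negP => npq.
have nuv : u != v by apply/eqP => h; rewrite h e_irr in euv.
have npq' : pi u != pi v by rewrite (inj_eq perm_inj).
set p := pi u in npq npq'; set q := pi v in npq npq'.
have hxp : L phi (delta u) p != 0 := hpi u.
have hyq : L phi (delta v) q != 0 := hpi v.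
set x := L phi (delta u) in hxp *; set y := L phi (delta v) in hyq *.
have Oxy : Om e x y.
  apply: (L_comm e_sym hphi) => s t /delta_neq0 -> /delta_neq0 ->.
  by rewrite euv orbT.
have h2 := Oxy p q npq.
have hxq : x q != 0.
  by apply/eqP => h0; move: h2; rewrite h0 mul0r => /eqP; rewrite mulf_eq0 (negbTE hxp) (negbTE hyq).
have hyp : y p != 0.
  by apply/eqP => h0; move: h2; rewrite h0 mulr0 => /eqP; rewrite mulf_eq0 (negbTE hxp) (negbTE hyq).
pose a' := fun w => x p * delta v w - y p * delta u w.
have hg : forall s, L phi a' s = x p * y s - y p * x s.
  move=> s; rewrite /a' (L_sub e_sym hphi (fun w => x p * delta v w) (fun w => y p * delta u w)).
  by rewrite !(L_scale e_sym hphi).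
have hg0 : forall s, ~~ e p s -> L phi a' s = 0.
  by move=> s hs; rewrite hg (Oxy p s hs) mulrC subrr.
case: (L_surj e_sym hphi (delta p)) => c hc.
have Oac : Om e a' c.
  apply: (L_refl e_sym hphi) => s t hs; rewrite hc => /delta_neq0 ->.
  case: (boolP (e p s)) => hps; first by rewrite e_sym hps orbT.
  by rewrite hg0 // eqxx in hs.
have hc0 : forall j, j != u -> ~~ e u j -> c j = 0.
  move=> j nju euj; have := Oac u j euj.
  have njv : j != v by apply/eqP => hjv; rewrite hjv euv in euj.
  rewrite /a' /delta (negbTE nju) (negbTE njv) eqxx (negbTE nuv) /= mulr0 mulr1 mulr0 subrr mul0r sub0r.
  by move/eqP; rewrite mulf_eq0 oppr_eq0 (negbTE hyp) => /eqP.
have Oxc : Om e x (L phi c).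
  apply: (L_comm e_sym hphi) => s t /delta_neq0 -> ht.
  case: (eqVneq u t) => // ntu.
  case: (boolP (e u t)) => hut //.
  by move: ht; rewrite hc0 ?eqxx // eq_sym.
have nqp : ~~ e q p by rewrite e_sym.
have := Oxc q p nqp.
rewrite !hc /delta eqxx eq_sym (negbTE npq') mulr1 mulr0 => /eqP.
by rewrite (negbTE hxq).
Qed.

Lemma pi_auto (pi : {perm 'I_n}) : (forall u v, e u v -> e (pi u) (pi v)) ->
  forall u v, e (pi u) (pi v) = e u v.
Proof.
move=> h u v; apply/idP/idP; last exact: h.
move=> he.
pose E := [set uv : 'I_n * 'I_n | e uv.1 uv.2].
pose f := fun uv : 'I_n * 'I_n => (pi uv.1, pi uv.2).
have finj : injective f by move=> [a b] [c d] /= [h1 h2]; rewrite (perm_inj h1) (perm_inj h2).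
have hsub : f @: E \subset E.
  apply/subsetP => z /imsetP [[a b]]; rewrite inE /= => hab hz.
  by rewrite hz inE /= h.
have heq : f @: E = E by apply/eqP; rewrite eqEcard hsub (card_imset _ finj) leqnn.
have : (pi u, pi v) \in f @: E by rewrite heq inE.
case/imsetP => [[a b]]; rewrite inE /= => hab [h1 h2].
by rewrite (perm_inj h1) (perm_inj h2).
Qed.

Definition rep (i : 'I_k) : 'I_n :=
  proj1_sig (constructive_indefinite_description _ (proj1 hjoin i)).
Lemma rep_part i : part (rep i) = i.
Proof. exact: (proj2_sig (constructive_indefinite_description _ (proj1 hjoin i))). Qed.

Definition sg (rho : {perm 'I_n}) (i : 'I_k) : 'I_k := part (rho (rep i)).

Lemma part_rho (rho : {perm 'I_n}) : (forall u v, e (rho u) (rho v) = e u v) ->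
  forall v, part (rho v) = sg rho (part v).
Proof.
move=> hr v; set i := part v.
pose A := [set w | (part w == i) && (part (rho w) == part (rho (rep i)))].
have hA : forall w, part w = i -> w \in A.
  move=> w hw; apply/negPn/negP => hwA.
  have [u [w' [huA hw' hw'A huw']]] : exists u v, [/\ u \in A, part v = i, v \notin A & ~~ e u v].
    apply: (hirr (A := A)).
    - by move=> x; rewrite inE => /andP [/eqP].
    - by apply/set0Pn; exists (rep i); rewrite inE rep_part !eqxx.
    - by exists w.
  move: huA; rewrite inE => /andP [_ /eqP hu].
  have hp : part (rho u) = part (rho w') by apply: nonedge_part; rewrite hr.
  by move: hw'A; rewrite inE hw' eqxx /= -hp hu eqxx.
by move: (hA v erefl); rewrite inE => /andP [_ /eqP].
Qed.

Lemma auto_inv (rho : {perm 'I_n}) : (forall u v, e (rho u) (rho v) = e u v) ->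
  forall u v, e (rho^-1%g u) (rho^-1%g v) = e u v.
Proof. by move=> h u v; rewrite -{2}(permKV rho u) -{2}(permKV rho v) h. Qed.

Lemma sg_can (rho : {perm 'I_n}) (h : forall u v, e (rho u) (rho v) = e u v) :
  cancel (sg rho) (sg rho^-1%g).
Proof.
move=> i; have := part_rho (auto_inv h) (rho (rep i)).
by rewrite permK rep_part => h'; rewrite [RHS]h'.
Qed.

Definition supp_in (a : 'I_n -> int) (i : 'I_k) := forall x, part x != i -> a x = 0.

Lemma Hsub_ab i w : Hsub e part i w -> supp_in (ab w) i.
Proof.
elim=> {w} [w [[v [hv ->]]|[a [b ->]]]|| u v _ IH1 _ IH2 | u _ IH | u v huv _ IH] x hx.
- rewrite /wx ab_cons ab_nil addr0 /lc /=.
  by case: (eqVneq v x) => // hvx; rewrite -hvx hv eqxx in hx.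
- exact: ab_wcomm.
- exact: ab_nil.
- by rewrite ab_cat IH1 // IH2 // addr0.
- by rewrite ab_winv IH // oppr0.
- by rewrite -(ab_wrel huv) IH.
Qed.

Lemma Hsub_of_ab i w : supp_in (ab w) i -> Hsub e part i w.
Proof.
move=> hw.
pose keep := fun l : bool * gen e => if l.2 is inl v then part v == i else false.
have hwi' : forall w0, Hsub e part i (filter keep w0).
  elim => [|[b g] w0 IH] /=; first exact: gs_nil.
  case: g => [v|p] /=; last exact: IH.
  case: ifP => hv; last exact: IH.
  rewrite -cat1s; apply: gs_mul => //.
  have hx : Hsub e part i (wx e v) by apply: gs_base; left; exists v; split => //; apply/eqP.
  by case: (b); [exact: (gs_inv hx) | exact: hx].
have hab' : forall w0 x, ab (filter keep w0) x = if part x == i then ab w0 x else 0.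
  move=> w0 x; elim: w0 => [|[b g] w0 IH] /=; first by rewrite !ab_nil; case: ifP.
  case: g => [v|p] /=; last by rewrite IH ab_cons /lc /= add0r.
  case: (eqVneq v x) => [->|nvx].
    have hk : keep (b, inl x) = (part x == i) by [].
    by rewrite hk; case: ifP => hv; rewrite ?ab_cons IH hv.
  have hl : lc (b, inl v) x = 0 by rewrite /lc /= (negbTE nvx).
  have hk : keep (b, inl v) = (part v == i) by [].
  rewrite hk; case: ifP => hv.
    by rewrite !ab_cons IH hl !add0r.
  by rewrite IH ab_cons hl add0r.
set wi := filter keep w.
have hwi := hwi' w; have hab := hab' w.
have hC : gsub (@Cset n e) (winv wi ++ w).
  apply: Clem0 => // x; rewrite ab_cat ab_winv hab.
  case: eqP => hx; first by rewrite addNr.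
  by rewrite oppr0 add0r hw //; apply/eqP.
have hH : Hsub e part i (winv wi ++ w).
  by apply: (gsub_mono _ hC) => z hz; right.
apply: gs_eq (gs_mul hwi hH).
by rewrite canc_r.
Qed.

Section WithPi.
Variable pi : {perm 'I_n}.
Hypothesis hpi : forall u, L phi (delta u) (pi u) != 0.
Hypothesis hauto : forall u v, e (pi u) (pi v) = e u v.

Definition sigma := perm (can_inj (sg_can hauto)).
Lemma sigmaE i : sigma i = sg pi i.
Proof. by rewrite permE. Qed.
Lemma part_pi v : part (pi v) = sigma (part v).
Proof. by rewrite sigmaE part_rho. Qed.

Lemma LV i : (forall a, supp_in a i -> supp_in (L phi a) (sigma i)) /\
             (forall c, supp_in c (sigma i) -> exists a, supp_in a i /\ forall x, L phi a x = c x).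
Proof.
pose W := fun w : 'I_n -> int => exists a, supp_in a i /\ forall x, w x = L phi a x.
pose W' := fun w : 'I_n -> int => exists a, (forall x, part x = i -> a x = 0) /\ forall x, w x = L phi a x.
have hOm : forall w w', W w -> W' w' -> Om e w w'.
  move=> w w' [a [ha hw]] [b [hb hw']] s t hst; rewrite !hw !hw'.
  apply: (L_comm e_sym hphi) => // s' t' hs ht.
  have ps : part s' = i.
    by apply/eqP; apply/negPn/negP => h; move: hs; rewrite ha // eqxx.
  have pt : part s' != part t'.
    by rewrite ps; apply/negP => /eqP h; move: ht; rewrite hb ?eqxx.
  by case: hjoin => _ /(_ s' t' pt) ->; rewrite orbT.
have hdec : forall c, exists w w', [/\ W w, W' w' & forall x, c x = w x + w' x].
  move=> c; case: (L_surj e_sym hphi c) => a ha.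
  pose a1 := fun x => if part x == i then a x else 0.
  pose a2 := fun x => if part x == i then 0 else a x.
  exists (L phi a1), (L phi a2); split.
  - by exists a1; split => // x hx; rewrite /a1 (negbTE hx).
  - by exists a2; split => // x hx; rewrite /a2 hx eqxx.
  - move=> x; rewrite -ha -(L_add e_sym hphi); apply: (L_ext e_sym hphi) => y.
    by rewrite /a1 /a2; case: (part y == i); rewrite ?addr0 ?add0r.
have hW : forall t, t != sigma i -> forall w, W w -> forall x, part x = t -> w x = 0.
  move=> t ht; case: (Indec hOm hdec t) => // hW'; exfalso.
  set j := (sigma^-1)%g t.
  have hj : part (pi (rep j)) = t by rewrite part_pi rep_part permKV.
  have : W' (L phi (delta (rep j))).
    exists (delta (rep j)); split => // x hx; rewrite /delta.
    case: (eqVneq x (rep j)) => // hxr; subst x.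
    by move: ht; rewrite -hj part_pi hx eqxx.
  move/hW' => /(_ _ hj) h0; by move: (hpi (rep j)); rewrite h0 eqxx.
have hW' : forall w', W' w' -> forall x, part x = sigma i -> w' x = 0.
  case: (Indec hOm hdec (sigma i)) => // hW0; exfalso.
  have : W (L phi (delta (rep i))).
    exists (delta (rep i)); split => // x hx; rewrite /delta.
    by case: (eqVneq x (rep i)) => // hxr; subst x; rewrite rep_part eqxx in hx.
  move/hW0 => /(_ (pi (rep i))); rewrite part_pi rep_part => /(_ erefl) h0.
  by move: (hpi (rep i)); rewrite h0 eqxx.
split.
- move=> a ha x hx; apply: (hW (part x)) => //; by exists a.
- move=> c hc; case: (hdec c) => w [w' [[a [ha hw]] hw'W hcx]].
  exists a; split => // x.
  case: (eqVneq (part x) (sigma i)) => hx.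
    by rewrite hcx (hW' w' hw'W x hx) addr0 hw.
  rewrite (hc x hx) -hw; apply: (hW (part x) hx) => //; by exists a.
Qed.

Lemma maps i : maps_onto phi (Hsub e part i) (Hsub e part (sigma i)).
Proof.
case: (LV i) => LV1 LV2; split.
- move=> w hw; apply: Hsub_of_ab => x hx.
  by rewrite -/(fab phi w x) (L_ab e_sym hphi) (LV1 _ (Hsub_ab hw)).
- move=> w hw; case: (phi_surj hphi w) => u hu.
  exists u; split => //; apply: Hsub_of_ab.
  case: (LV2 _ (Hsub_ab hw)) => a [ha hLa].
  have h0 : forall x, L phi (fun y => ab u y - a y) x = 0.
    move=> x; rewrite (L_sub e_sym hphi) hLa -(L_ab e_sym hphi) /fab (ab_wrel hu).
    by rewrite subrr.
  move=> x hx; have := L_inj e_sym hphi h0 x.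
  by rewrite ha // subr0.
Qed.

Lemma uniq_sigma (tau : {perm 'I_k}) :
  (forall i, maps_onto phi (Hsub e part i) (Hsub e part (tau i))) -> tau = sigma.
Proof.
move=> ht; apply/permP => i.
set v := rep (sigma i).
have hv : Hsub e part (sigma i) (wx e v) by apply: gs_base; left; exists v; rewrite rep_part.
case: (maps i) => _ /(_ _ hv) [u [hu hu']].
case: (ht i) => /(_ _ hu) h1 _.
have h2 : Hsub e part (tau i) (wx e v) := gs_eq hu' h1.
apply/eqP; apply/negPn/negP => hne.
have hpv : part v != tau i by rewrite rep_part eq_sym.
have := Hsub_ab h2 hpv.
by rewrite /wx ab_cons ab_nil /lc /= eqxx addr0.
Qed.

Lemma iso i : parts_iso e part i (sigma i).
Proof.
exists pi; split.
- by move=> u v _ _ /perm_inj.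
- by move=> v hv; rewrite part_pi hv.
- move=> w hw; exists (pi^-1%g w); split; last by rewrite permKV.
  by apply: (@perm_inj _ sigma); rewrite -part_pi permKV.
- by move=> u v _ _; rewrite hauto.
Qed.

End WithPi.

End Main.

Local Close Scope ring_scope.

Theorem corollary5p10 (n : nat) (e : rel 'I_n)
  (e_sym : symmetric e) (e_irr : irreflexive e)
  (no_full_degree : forall v : 'I_n, exists w, w != v /\ ~~ e v w)
  (k : nat) (part : 'I_n -> 'I_k)
  (hjoin : join_decomp e part)
  (hirr : forall i : 'I_k, join_irreducible_part e part i)
  (phi : word e -> word e) (hphi : is_aut phi) :
  exists sigma : {perm 'I_k},
    ((forall i : 'I_k,
        maps_onto phi (Hsub e part i) (Hsub e part (sigma i))) /\
     (forall i : 'I_k, parts_iso e part i (sigma i))) /\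
    (forall tau : {perm 'I_k},
       ((forall i : 'I_k,
           maps_onto phi (Hsub e part i) (Hsub e part (tau i))) /\
        (forall i : 'I_k, parts_iso e part i (tau i))) -> tau = sigma).
Proof.
case: (exists_pi e_sym hphi) => pi hpi.
have hauto := pi_auto (pi_edge e_sym e_irr hphi hpi).
exists (sigma hjoin hirr hauto); split.
  split => i; first exact: (maps e_sym no_full_degree hjoin hirr hphi hpi hauto).
  exact: iso.
move=> tau [ht _].
exact: (uniq_sigma e_sym no_full_degree hjoin hirr hphi hpi hauto ht).
Qed.
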